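(* Every translation from limit-deterministic Büchi automata to deterministic parity automata produces, in the worst case, for input LDBAs with $n$ states, output automata with $2^{\Omega(n\log n)}$ states.
   Context: A limit-deterministic Büchi automaton (LDBA) is a nondeterministic Büchi automaton $(Q,q_0,\Sigma,\delta,\alpha)$ together with $Q_d\subseteq Q$ such that all accepting transitions are within $Q_d$, the transition relation is deterministic on $Q_d$, and $Q_d$ is closed under successors. A deterministic parity automaton has a deterministic transition function and a coloring of transitions by positive integers; a word is accepted iff the minimal color seen infinitely often on its run is even. A translation maps each LDBA to a DPA recognizing the same language. *)

(* Defs.v *)
From mathcomp Require Import all_boot.
Set Implicit Arguments. Unset Strict Implicit. Unset Printing Implicit Defensive.

Definition word (Sigma : finType) := nat -> Sigma.

Record LDBA (Sigma : finType) := {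
  lstate : finType;
  linit : lstate;
  ltrans : lstate -> Sigma -> {set lstate};
  lacc : lstate -> Sigma -> lstate -> bool;
  lQd : {set lstate};
  lacc_trans : forall q a q', lacc q a q' -> q' \in ltrans q a;
  lacc_Qd : forall q a q', lacc q a q' -> (q \in lQd) && (q' \in lQd);
  lQd_det : forall q a, q \in lQd -> #|ltrans q a| <= 1;
  lQd_closed : forall q a q', q \in lQd -> q' \in ltrans q a -> q' \in lQd
}.

Definition ldba_run (Sigma : finType) (A : LDBA Sigma) (w : word Sigma)
    (r : nat -> lstate A) : Prop :=
  r 0 = linit A /\ forall i, r i.+1 \in ltrans (r i) (w i).

Arguments ldba_run {Sigma} A w r.

Definition ldba_accepting_run (Sigma : finType) (A : LDBA Sigma) (w : word Sigma)
    (r : nat -> lstate A) : Prop :=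
  forall i, exists2 j, i <= j & lacc (r j) (w j) (r j.+1).

Arguments ldba_accepting_run {Sigma} A w r.

Definition ldba_accepts (Sigma : finType) (A : LDBA Sigma) (w : word Sigma) : Prop :=
  exists r, ldba_run A w r /\ ldba_accepting_run A w r.

Record DPA (Sigma : finType) := {
  dstate : finType;
  dinit : dstate;
  dtrans : dstate -> Sigma -> dstate;
  dcol : dstate -> Sigma -> nat;
  dcol_pos : forall q a, 0 < dcol q a
}.

Fixpoint dpa_run (Sigma : finType) (D : DPA Sigma) (w : word Sigma) (i : nat) : dstate D :=
  match i with
  | 0 => dinit D
  | i'.+1 => dtrans (dpa_run D w i') (w i')
  end.

Arguments dpa_run {Sigma} D w i.

Definition dpa_color (Sigma : finType) (D : DPA Sigma) (w : word Sigma) (i : nat) : nat :=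
  dcol (dpa_run D w i) (w i).

Definition dpa_accepts (Sigma : finType) (D : DPA Sigma) (w : word Sigma) : Prop :=
  exists m,
    ~~ odd m /\
    (forall i, exists2 j, i <= j & dpa_color D w j = m) /\
    (exists i, forall j, i <= j -> m <= dpa_color D w j).

Definition translation :=
  forall Sigma : finType, LDBA Sigma -> DPA Sigma.

Definition correct_translation (T : translation) : Prop :=
  forall (Sigma : finType) (A : LDBA Sigma) (w : word Sigma),
    ldba_accepts A w <-> dpa_accepts (T Sigma A) w.

(* Main.v *)
Require Import Defs.
From mathcomp Require Import all_boot zify.
Set Implicit Arguments. Unset Strict Implicit. Unset Printing Implicit Defensive.

Definition runs (Sigma : finType) (D : DPA Sigma) (y : dstate D) (u : seq Sigma) :=
  foldl (fun s a => dtrans s a) y u.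

Fixpoint cols (Sigma : finType) (D : DPA Sigma) (y : dstate D) (u : seq Sigma) : seq nat :=
  match u with
  | [::] => [::]
  | a :: u' => dcol y a :: @cols Sigma D (dtrans y a) u'
  end.
Arguments cols {Sigma} D y u.
Arguments runs {Sigma} D y u.

Definition pw (Sigma : finType) (a0 : Sigma) (p l : seq Sigma) : word Sigma :=
  fun i => if i < size p then nth a0 p i else nth a0 l ((i - size p) %% size l).

Lemma runs_cat (Sigma : finType) (D : DPA Sigma) y u v :
  runs D y (u ++ v) = runs D (runs D y u) v.
Proof. by rewrite /runs foldl_cat. Qed.

Lemma cols_cat (Sigma : finType) (D : DPA Sigma) y u v :
  cols D y (u ++ v) = cols D y u ++ cols D (runs D y u) v.
Proof. by elim: u y => //= a u IH y; rewrite IH. Qed.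

Lemma size_cols (Sigma : finType) (D : DPA Sigma) y u : size (cols D y u) = size u.
Proof. by elim: u y => //= a u IH y; rewrite IH. Qed.

Lemma nth_cols (Sigma : finType) (D : DPA Sigma) (a0 : Sigma) y u t : t < size u ->
  nth 0 (cols D y u) t = dcol (runs D y (take t u)) (nth a0 u t).
Proof.
elim: u y t => //= a u IH y [|t] //= Ht.
by rewrite IH.
Qed.

Lemma runs_take_succ (Sigma : finType) (D : DPA Sigma) (a0 : Sigma) y u t : t < size u ->
  runs D y (take t.+1 u) = dtrans (runs D y (take t u)) (nth a0 u t).
Proof. by move=> Ht; rewrite (take_nth a0 Ht) /runs foldl_rcons. Qed.

Lemma run_prefix (Sigma : finType) (D : DPA Sigma) a0 p l i : i <= size p ->
  dpa_run D (pw a0 p l) i = runs D (dinit D) (take i p).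
Proof.
elim: i => [|i IH] Hi /=; first by rewrite take0.
rewrite IH ?(ltnW Hi) // (runs_take_succ a0) // /pw Hi //.
Qed.

Lemma run_periodic (Sigma : finType) (D : DPA Sigma) a0 p l x :
  runs D (dinit D) p = x -> runs D x l = x -> 0 < size l ->
  forall k, dpa_run D (pw a0 p l) (size p + k) = runs D x (take (k %% size l) l).
Proof.
move=> Hp Hl Hs; elim=> [|k IH].
  by rewrite addn0 mod0n take0 run_prefix // take_size.
rewrite addnS /= IH /pw ltnNge leq_addr /= addKn.
have Ht := ltn_pmod k Hs.
rewrite -(runs_take_succ a0 _ Ht).
have -> : k.+1 %% size l = (k %% size l).+1 %% size l by rewrite -addn1 -modnDml addn1.
case: (ltngtP (k %% size l).+1 (size l)) => H.
- by rewrite (modn_small H).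
- by rewrite ltnNge Ht in H.
- by rewrite H modnn take0 take_size Hl.
Qed.

Lemma color_periodic (Sigma : finType) (D : DPA Sigma) a0 p l x :
  runs D (dinit D) p = x -> runs D x l = x -> 0 < size l ->
  forall k, dpa_color D (pw a0 p l) (size p + k) = nth 0 (cols D x l) (k %% size l).
Proof.
move=> Hp Hl Hs k; rewrite /dpa_color (run_periodic a0 Hp Hl Hs) (nth_cols a0) ?ltn_pmod //.
by rewrite /pw ltnNge leq_addr /= addKn.
Qed.

Lemma dpa_periodic (Sigma : finType) (D : DPA Sigma) a0 p l x :
  runs D (dinit D) p = x -> runs D x l = x -> 0 < size l ->
  dpa_accepts D (pw a0 p l) <->
  exists2 c, c \in cols D x l & ~~ odd c /\ forall c', c' \in cols D x l -> c <= c'.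
Proof.
move=> Hp Hl Hs; have Hc := color_periodic a0 Hp Hl Hs.
have Hsz : size (cols D x l) = size l by rewrite size_cols.
split.
- case=> c [Hev [Hinf [i0 Hev2]]]; exists c; last split => //.
  + have [j Hj Hjc] := Hinf (size p).
    rewrite -(subnKC Hj) Hc in Hjc; rewrite -Hjc mem_nth // Hsz ltn_pmod //.
  + move=> c' Hc'; set t := index c' (cols D x l).
    have Ht : t < size l by rewrite -Hsz index_mem.
    have := Hev2 (size p + (i0 * size l + t)).
    rewrite Hc modnMDl modn_small // nth_index //; apply.
    by rewrite (leq_trans _ (leq_addl _ _)) // (leq_trans _ (leq_addr _ _)) // leq_pmulr.
- case=> c Hin [Hev Hmin]; exists c; split => //; split.
  + move=> i; set t := index c (cols D x l).
    have Ht : t < size l by rewrite -Hsz index_mem.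
    exists (size p + (i * size l + t)).
      by rewrite (leq_trans _ (leq_addl _ _)) // (leq_trans _ (leq_addr _ _)) // leq_pmulr.
    by rewrite Hc modnMDl modn_small // nth_index.
  + exists (size p) => j Hj; rewrite -(subnKC Hj) Hc; apply: Hmin.
    by rewrite mem_nth // Hsz ltn_pmod.
Qed.

Definition edge (Sigma : finType) (D : DPA Sigma) (A : {set Sigma}) : rel (dstate D) :=
  fun y z => [exists a in A, dtrans y a == z].
Arguments edge {Sigma} D A.

Definition recur (Sigma : finType) (D : DPA Sigma) (A : {set Sigma}) (x : dstate D) :=
  [forall z, connect (edge D A) x z ==> connect (edge D A) z x].
Arguments recur {Sigma} D A x.

Lemma connect_word (Sigma : finType) (D : DPA Sigma) A y z :
  connect (edge D A) y z -> exists u, all (fun a => a \in A) u /\ runs D y u = z.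
Proof.
move=> /connectP [p Hp ->]; elim: p y Hp => [|c p IH] y /=; first by exists [::].
case/andP=> /existsP [a /andP [Ha /eqP Hc]] Hp.
have [u [Hu Hr]] := IH c Hp; exists (a :: u); split; first by rewrite /= Ha.
by rewrite /runs /= Hc.
Qed.

Lemma connect_mono (Sigma : finType) (D : DPA Sigma) (A B : {set Sigma}) y z :
  A \subset B -> connect (edge D A) y z -> connect (edge D B) y z.
Proof.
move=> AB; apply: connect_sub => u v /existsP [a /andP [Ha Hv]].
apply: connect1; apply/existsP; exists a; by rewrite (subsetP AB).
Qed.

Lemma recur_prop (Sigma : finType) (D : DPA Sigma) A x z :
  recur D A x -> connect (edge D A) x z -> recur D A z.
Proof.
move=> /forallP Hx Hxz; apply/forallP => z'; apply/implyP => Hzz'.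
have Hxz' := connect_trans Hxz Hzz'.
exact: connect_trans (implyP (Hx z') Hxz') Hxz.
Qed.

Lemma recur_exists (Sigma : finType) (D : DPA Sigma) A q :
  exists x, connect (edge D A) q x && recur D A x.
Proof.
move: {2}#|[set z | connect (edge D A) q z]| (leqnn #|[set z | connect (edge D A) q z]|) => n.
elim: n q => [|n IH] q Hn.
  have Hq : q \in [set z | connect (edge D A) q z] by rewrite inE connect0.
  by move: Hn; rewrite leqn0 => /eqP /cards0_eq Heq; rewrite Heq inE in Hq.
case Hr: (recur D A q); first by exists q; rewrite connect0.
move: Hr => /negbT; rewrite negb_forall => /existsP [z]; rewrite negb_imply => /andP [Hqz Hzq].
have Hsub : [set y | connect (edge D A) z y] \proper [set y | connect (edge D A) q y].
  apply/properP; split.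
    by apply/subsetP => y; rewrite !inE; apply: connect_trans.
  by exists q; rewrite !inE ?connect0.
have Hzn : #|[set y | connect (edge D A) z y]| <= n.
  by rewrite -ltnS (leq_trans (proper_card Hsub) Hn).
have [x /andP [Hzx Hx]] := IH z Hzn.
by exists x; rewrite Hx (connect_trans Hqz Hzx).
Qed.

Lemma recur_loop (Sigma : finType) (D : DPA Sigma) A x : recur D A x ->
  forall s : seq Sigma, {subset s <= A} -> exists l : seq Sigma, [/\ all (fun a => a \in A) l, {subset s <= l} & runs D x l = x].
Proof.
move=> /forallP Hx; elim=> [|a s IH] Hs; first by exists [::].
have [l [Hl1 Hl2 Hl3]] := IH (fun b Hb => Hs b (@mem_behead _ (a :: s) b Hb)).
have Ha : a \in A by apply: Hs; rewrite mem_head.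
have Hc : connect (edge D A) x (dtrans x a).
  by apply: connect1; apply/existsP; exists a; rewrite Ha /=.
have [v [Hv1 Hv2]] := connect_word (implyP (Hx _) Hc).
exists (a :: v ++ l); split.
- by rewrite /= Ha all_cat Hv1 Hl1.
- move=> b; rewrite inE => /orP [/eqP -> | Hb]; first by rewrite mem_head.
  by rewrite inE mem_cat Hl2 ?orbT.
- by rewrite /runs /= foldl_cat -/(runs D _ v) Hv2.
Qed.

Definition Sig (m : nat) : finType := ('I_m + 'I_m)%type.

Definition ltr (m : nat) (q : option 'I_m) (a : Sig m) : {set option 'I_m} :=
  match q with
  | None => setT
  | Some j => if a == inl j then set0 else [set Some j]
  end.

Definition lac (m : nat) (q : option 'I_m) (a : Sig m) (q' : option 'I_m) : bool :=
  match q, q' with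
  | Some j, Some j' => (j' == j) && (a == inr j)
  | _, _ => false
  end.

Definition lqd (m : nat) : {set option 'I_m} := [set q | q != None].

Lemma lac_trans m q a q' : @lac m q a q' -> q' \in ltr q a.
Proof.
case: q => [j|] //; case: q' => [j'|] // /andP [/eqP -> /eqP ->] /=.
by rewrite set11.
Qed.

Lemma lac_Qd m q a q' : @lac m q a q' -> (q \in lqd m) && (q' \in lqd m).
Proof. by case: q => [j|] //; case: q' => [j'|] //= _; rewrite !inE. Qed.

Lemma lqd_det m q a : q \in lqd m -> #|@ltr m q a| <= 1.
Proof. case: q => [j _|]; last by rewrite inE. rewrite /=; case: (a == inl j); by rewrite ?cards0 ?cards1. Qed.

Lemma lqd_closed m q a q' : q \in lqd m -> q' \in @ltr m q a -> q' \in lqd m.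
Proof.
case: q => [j _|]; last by rewrite inE.
rewrite /=; case: ifP => _; first by rewrite inE.
by rewrite inE => /eqP ->; rewrite inE.
Qed.

Definition AA (m : nat) : LDBA (Sig m) :=
  {| lstate := option 'I_m; linit := None; ltrans := @ltr m; lacc := @lac m;
     lQd := lqd m; lacc_trans := @lac_trans m; lacc_Qd := @lac_Qd m;
     lQd_det := @lqd_det m; lQd_closed := @lqd_closed m |}.

Lemma AA_card m : #|lstate (AA m)| = m.+1.
Proof. by rewrite /= card_option card_ord. Qed.

Lemma pw_in (Sigma : finType) (a0 : Sigma) p l t : 0 < size l -> size p <= t ->
  pw a0 p l t \in l.
Proof. by move=> Hl Ht; rewrite /pw ltnNge Ht /= mem_nth // ltn_pmod. Qed.

Lemma pw_at (Sigma : finType) (a0 : Sigma) p l j t : t < size l ->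
  pw a0 p l (size p + (j * size l + t)) = nth a0 l t.
Proof.
move=> Ht; have Hl : 0 < size l by apply: leq_ltn_trans Ht.
by rewrite /pw ltnNge leq_addr /= addKn modnMDl modn_small.
Qed.

Lemma AA_acc m a0 p l (j : 'I_m) : inl j \notin l -> inr j \in l ->
  ldba_accepts (AA m) (pw a0 p l).
Proof.
move=> Hnl Hr.
have Hl : 0 < size l by case: l Hnl Hr.
exists (fun t => if t <= size p then None else Some j); split.
  split => // t /=; case: ifP => Ht.
    by rewrite (ltnW Ht) inE.
  case: ifP => Ht2; first by rewrite inE.
  have Hin : pw a0 p l t \in l by apply: pw_in => //; rewrite leqNgt Ht.
  rewrite /= ifN ?set11 //; apply: contraNneq Hnl => <-; exact: Hin.
move=> i; set t0 := index (inr j) l.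
have Ht0 : t0 < size l by rewrite index_mem.
exists (size p + (i.+1 * size l + t0)).
  by rewrite (leq_trans (ltnW (ltnSn i)) _) // (leq_trans _ (leq_addl _ _)) // (leq_trans _ (leq_addr _ _)) // leq_pmulr.
have Hpos : 0 < i.+1 * size l by rewrite muln_gt0.
rewrite pw_at // nth_index //=.
have H1 : (size p + (i.+1 * size l + t0) <= size p) = false by apply/negbTE; rewrite -ltnNge; lia.
have H2 : (size p + (i.+1 * size l + t0) < size p) = false by apply/negbTE; rewrite -ltnNge; lia.
by rewrite H1 H2 /= !eqxx.
Qed.

Lemma AA_rej m a0 p l : 0 < size l -> (forall j : 'I_m, inr j \in l -> inl j \in l) ->
  ~ ldba_accepts (AA m) (pw a0 p l).
Proof.
move=> Hl H [r [[Hr0 Hrs] Hacc]].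
have [t Ht Hlac] := Hacc (size p).
case E: (r t) Hlac => [j|] //=; case E2: (r t.+1) => [j'|] //= /andP [_ /eqP Hw].
have Hinr : inr j \in l by rewrite -Hw; apply: pw_in.
have Hinl := H j Hinr.
have Hk : forall k, r (t + k) = Some j.
  elim=> [|k IH]; first by rewrite addn0.
  have := Hrs (t + k); rewrite IH /=; case: ifP => _; first by rewrite inE.
  by rewrite addnS inE => /eqP.
set t1 := index (inl j) l.
have Ht1 : t1 < size l by rewrite index_mem.
set s := size p + (t.+1 * size l + t1).
have Hpos : 0 < t.+1 * size l by rewrite muln_gt0.
have Hs : t <= s by rewrite /s; nia.
have := Hrs s; rewrite -(subnKC Hs) Hk (subnKC Hs) /s pw_at // nth_index //= eqxx.
by rewrite inE.
Qed.

Definition lidx m (a : Sig m) : 'I_m := match a with inl j => j | inr j => j end.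
Definition SS m (K : {set 'I_m}) : {set Sig m} := [set a | lidx a \notin K].
Definition AK m (K : {set 'I_m}) (i : 'I_m) : {set Sig m} := SS K :\ inl i.

Lemma sum_disj (I T : finType) (s : seq I) (Z : I -> {set T}) (U : {set T}) :
  uniq s -> (forall i, i \in s -> Z i \subset U) ->
  (forall i j z, i \in s -> j \in s -> i != j -> z \in Z i -> z \in Z j -> False) ->
  \sum_(i <- s) #|Z i| <= #|U|.
Proof.
elim: s U => [|a s IH] U /=; first by rewrite big_nil.
case/andP=> Has Hu Hsub Hdis; rewrite big_cons.
have HaU : Z a \subset U by apply: Hsub; rewrite mem_head.
rewrite -(cardsID (Z a) U) (setIidPr HaU) leq_add2l.
apply: IH => //.
- move=> i Hi; apply/subsetP => z Hz; rewrite inE.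
  rewrite (subsetP (Hsub i _)) ?inE ?Hi ?orbT // andbT.
  apply/negP => Hza; apply: (Hdis a i z) => //; first by rewrite mem_head.
    by rewrite inE Hi orbT.
  by apply: contraNneq Has => ->.
- by move=> i j z Hi Hj; apply: Hdis; rewrite inE ?Hi ?Hj orbT.
Qed.

Lemma no_two m (D : DPA (Sig m))
  (HT : forall w, ldba_accepts (AA m) w <-> dpa_accepts D w)
  (K : {set 'I_m}) (i i' : 'I_m) z :
  connect (edge D setT) (dinit D) z -> i != i' -> i \notin K -> i' \notin K ->
  recur D (AK K i) z -> recur D (AK K i') z -> False.
Proof.
move=> Hz Hii HiK Hi'K Hr1 Hr2.
have [p [_ Hp]] := connect_word Hz.
have E1 : {subset enum (AK K i) <= AK K i} by move=> b; rewrite mem_enum.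
have E2 : {subset enum (AK K i') <= AK K i'} by move=> b; rewrite mem_enum.
have [l1 [Ha1 Hs1 Hl1]] := recur_loop Hr1 E1.
have [l2 [Ha2 Hs2 Hl2]] := recur_loop Hr2 E2.
have M1 : forall b, (b \in l1) = (b \in AK K i).
  move=> b; apply/idP/idP => Hb; first exact: (allP Ha1).
  by apply: Hs1; rewrite mem_enum.
have M2 : forall b, (b \in l2) = (b \in AK K i').
  move=> b; apply/idP/idP => Hb; first exact: (allP Ha2).
  by apply: Hs2; rewrite mem_enum.
have In1 : inr i \in l1 by rewrite M1 !inE /= HiK.
have In2 : inr i' \in l2 by rewrite M2 !inE /= Hi'K.
have Nl1 : inl i \notin l1 by rewrite M1 !inE eqxx.
have Nl2 : inl i' \notin l2 by rewrite M2 !inE eqxx.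
have S1 : 0 < size l1 by case: l1 {Ha1 Hs1 Hl1 M1 Nl1} In1.
have S2 : 0 < size l2 by case: l2 {Ha2 Hs2 Hl2 M2 Nl2} In2.
set a0 : Sig m := inl i.
have A1 := (HT (pw a0 p l1)).1 (AA_acc a0 p Nl1 In1).
have A2 := (HT (pw a0 p l2)).1 (AA_acc a0 p Nl2 In2).
have [c1 Hc1 [Ev1 Min1]] := (dpa_periodic a0 Hp Hl1 S1).1 A1.
have [c2 Hc2 [Ev2 Min2]] := (dpa_periodic a0 Hp Hl2 S2).1 A2.
have Hl3 : runs D z (l1 ++ l2) = z by rewrite runs_cat Hl1 Hl2.
have S3 : 0 < size (l1 ++ l2) by rewrite size_cat addn_gt0 S1.
have A3 : dpa_accepts D (pw a0 p (l1 ++ l2)).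
  apply/(dpa_periodic a0 Hp Hl3 S3); rewrite cols_cat Hl1.
  exists (minn c1 c2); first by rewrite mem_cat /minn; case: ifP => _; rewrite ?Hc1 ?Hc2 ?orbT.
  split; first by rewrite /minn; case: ifP.
  move=> c'; rewrite mem_cat => /orP [H | H].
    by rewrite geq_min Min1.
  by rewrite geq_min Min2 ?orbT.
have X := (HT _).2 A3. apply: (@AA_rej m a0 p (l1 ++ l2) S3 _ X) => j.
have Hjn : forall b : Sig m, b \in AK K i -> lidx b \notin K.
  by move=> b; rewrite !inE => /andP [_].
have Hjn' : forall b : Sig m, b \in AK K i' -> lidx b \notin K.
  by move=> b; rewrite !inE => /andP [_].
rewrite !mem_cat !M1 !M2 => Hj.
have HjK : j \notin K by case/orP: Hj => [/Hjn | /Hjn'].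
case: (eqVneq j i) => [Eji | Hji].
  subst j; rewrite /AK /SS !inE /= HiK.
  apply/orP; right; rewrite andbT; apply/eqP => -[] E; by rewrite E eqxx in Hii.
rewrite /AK /SS !inE /= HjK.
apply/orP; left; rewrite andbT; apply/eqP => -[] E; by rewrite E eqxx in Hji.
Qed.

Lemma claim m (D : DPA (Sig m))
  (HT : forall w, ldba_accepts (AA m) w <-> dpa_accepts D w) r :
  forall (K : {set 'I_m}) q, #|~: K| = r -> connect (edge D setT) (dinit D) q ->
  r`! <= #|[set z | connect (edge D (SS K)) q z]|.
Proof.
elim: r => [|r IH] K q HK Hq.
  by apply/card_gt0P; exists q; rewrite inE connect0.
pose P i x := connect (edge D (AK K i)) q x && recur D (AK K i) x.
pose xi i := odflt q [pick x | P i x].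
have Hx : forall i, P i (xi i).
  move=> i; rewrite /xi; case: pickP => [x Hx //|H0].
  by have [x Hx] := @recur_exists _ D (AK K i) q; have := H0 x; rewrite /P Hx.
pose Z i := [set z | connect (edge D (SS (i |: K))) (xi i) z].
have SA : forall i, SS (i |: K) \subset AK K i.
  move=> i; apply/subsetP => a; rewrite /AK /SS !inE negb_or => /andP [Ha1 ->].
  rewrite andbT; apply: contra Ha1 => /eqP -> /=; by [].
have AS : forall i, AK K i \subset SS K by move=> i; apply: subsetDl.
have Hsum : \sum_(i <- enum (~: K)) #|Z i| <= #|[set z | connect (edge D (SS K)) q z]|.
  apply: sum_disj; first exact: enum_uniq.
  - move=> i _; apply/subsetP => z; rewrite !inE => Hz.
    have /andP [Hq1 _] := Hx i.
    apply: connect_trans (connect_mono (AS i) Hq1) _.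
    exact: connect_mono (subset_trans (SA i) (AS i)) Hz.
  - move=> i j z; rewrite !mem_enum !inE => Hi Hj Hij Hzi Hzj.
    have /andP [Hq1 Hr1] := Hx i; have /andP [Hq2 Hr2] := Hx j.
    have Hzr : connect (edge D setT) (dinit D) z.
      apply: connect_trans Hq _; apply: connect_trans (connect_mono (subsetT _) Hq1) _.
      exact: connect_mono (subsetT _) Hzi.
    apply: (no_two HT Hzr Hij Hi Hj).
      exact: recur_prop Hr1 (connect_mono (SA i) Hzi).
    exact: recur_prop Hr2 (connect_mono (SA j) Hzj).
apply: leq_trans Hsum.
have -> : r.+1`! = \sum_(i <- enum (~: K)) r`!.
  by rewrite big_enum sum_nat_const HK factS.
rewrite big_seq [X in _ <= X]big_seq; apply: leq_sum => i; rewrite mem_enum => Hi.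
have /andP [Hq1 _] := Hx i.
apply: IH.
  have -> : ~: (i |: K) = (~: K) :\ i by apply/setP => y; rewrite !inE negb_or.
  by move: HK; rewrite (cardsD1 i) Hi add1n => -[].
apply: connect_trans Hq (connect_mono (subsetT _) Hq1).
Qed.

Lemma dpa_lower m (D : DPA (Sig m))
  (HT : forall w, ldba_accepts (AA m) w <-> dpa_accepts D w) :
  m`! <= #|dstate D|.
Proof.
have := @claim m D HT m set0 (dinit D).
rewrite setC0 cardsT card_ord connect0 => H.
exact: leq_trans (H erefl isT) (max_card _).
Qed.

Lemma prod_succ m : \prod_(i < m) i.+1 = m`!.
Proof. elim: m => [|m IH]; first by rewrite big_ord0. by rewrite big_ord_recr /= IH factS mulnC. Qed.

Lemma fact_sq m : m ^ m <= (m`!) ^ 2.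
Proof.
have E1 : \prod_(i < m) (m - i) = m`!.
  rewrite (reindex_inj rev_ord_inj) /= -prod_succ; apply: eq_bigr => i _.
  have := ltn_ord i; lia.
rewrite expnS expn1 -{1}prod_succ -{1}E1 -big_split /=.
rewrite -(card_ord m) -prod_nat_const card_ord.
apply: leq_prod => i _; have := ltn_ord i; nia.
Qed.

Lemma final_ineq m d : 3 <= m -> m`! <= d -> m.+1 ^ m.+1 <= d ^ 4.
Proof.
move=> Hm Hd.
have H1 : m.+1 <= 2 ^ m by apply: ltn_expl.
have H2 : m.+1 ^ m.+1 <= (2 * m.+1) ^ m.
  by rewrite expnS expnMn leq_mul.
have H3 : (2 * m.+1) ^ m <= (m ^ 2) ^ m by rewrite leq_exp2r //; try lia; nia.
have H4 : (m ^ 2) ^ m = (m ^ m) ^ 2 by rewrite -!expnM mulnC.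
have H5 : (m ^ m) ^ 2 <= ((m`!) ^ 2) ^ 2 by rewrite leq_exp2r // fact_sq.
have H6 : ((m`!) ^ 2) ^ 2 <= d ^ 4 by rewrite -expnM leq_exp2r.
by rewrite (leq_trans H2) // (leq_trans H3) // H4 (leq_trans H5).
Qed.

Theorem mainTheorem6 (T : translation) (HT : correct_translation T) :
  exists k : nat, 0 < k /\
  exists N : nat, forall n : nat, N <= n ->
    exists (Sigma : finType) (A : LDBA Sigma),
      #|lstate A| = n /\ n ^ n <= #|dstate (T Sigma A)| ^ k.
Proof.
exists 4; split => //; exists 4 => n; case: n => [|m] // Hm.
exists (Sig m), (AA m); split; first exact: AA_card.
apply: final_ineq; first by [].
exact: dpa_lower (HT (Sig m) (AA m)).
Qed.
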